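(* Let $M$ be any matroid and let $N$ be a matroid whose simplification is the free matroid $U_{n,n}$. Then a tensor product of $M$ and $N$ exists and is unique.
   Context: Quasi product of matroids $M,N$: a matroid $P$ on $E(M)\times E(N)$ such that for every non-loop $e\in E(M)$, $x\mapsto(e,x)$ is an isomorphism $N\cong P|_{\{e\}\times E(N)}$; for every non-loop $f\in E(N)$, $x\mapsto(x,f)$ is an isomorphism $M\cong P|_{E(M)\times\{f\}}$; and the rows $\{e\}\times E(N)$ with $e$ a loop of $M$ and columns $E(M)\times\{f\}$ with $f$ a loop of $N$ have rank $0$. A tensor product is a quasi product of rank $\mathrm{rk}(M)\mathrm{rk}(N)$. $U_{n,n}$ is the free matroid of rank $n$ on $n$ elements. *)

(* Defs.v *)
From mathcomp Require Import all_boot.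
Set Implicit Arguments. Unset Strict Implicit. Unset Printing Implicit Defensive.

(* A matroid whose ground set is the whole finite type T. *)
Record matroid (T : finType) := Matroid {
  indep : {set T} -> bool;
  indep0 : indep set0;
  indep_sub : forall A B : {set T}, A \subset B -> indep B -> indep A;
  indep_aug : forall A B : {set T}, indep A -> indep B -> #|A| < #|B| ->
     exists2 x, x \in B :\: A & indep (x |: A)
}.

Definition mrank (T : finType) (M : matroid T) (A : {set T}) : nat :=
  \max_(B : {set T} | (B \subset A) && indep M B) #|B|.

Definition loop (T : finType) (M : matroid T) (e : T) : bool := ~~ indep M [set e].

Definition iso_restr (T1 T2 : finType) (M : matroid T1) (N : matroid T2)
    (S : {set T2}) (f : T1 -> T2) : Prop :=
  [/\ injective f, f @: [set: T1] = S &
      forall A : {set T1}, indep M A = indep N (f @: A)].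

Definition quasi_product (T1 T2 : finType) (M : matroid T1) (N : matroid T2)
    (P : matroid (T1 * T2)%type) : Prop :=
  [/\ (forall e : T1, ~~ loop M e ->
         iso_restr N P [set (e, x) | x : T2] (fun x => (e, x))),
      (forall f : T2, ~~ loop N f ->
         iso_restr M P [set (x, f) | x : T1] (fun x => (x, f))),
      (forall e : T1, loop M e -> mrank P [set (e, x) | x : T2] = 0) &
      (forall f : T2, loop N f -> mrank P [set (x, f) | x : T1] = 0)].

Definition tensor_product (T1 T2 : finType) (M : matroid T1) (N : matroid T2)
    (P : matroid (T1 * T2)%type) : Prop :=
  quasi_product M N P /\ mrank P setT = mrank M setT * mrank N setT.

Lemma Unn_sub n (A B : {set 'I_n}) : A \subset B -> true -> true.
Proof. by []. Qed.
Lemma Unn_aug n (A B : {set 'I_n}) : true -> true -> #|A| < #|B| ->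
  exists2 x, x \in B :\: A & true.
Proof.
move=> _ _ lt; have : 0 < #|B :\: A|.
  rewrite cardsD subn_gt0; apply: (leq_ltn_trans _ lt).
  exact: subset_leq_card (subsetIr B A).
by case/card_gt0P => x hx; exists x.
Qed.
Definition Unn (n : nat) : matroid 'I_n :=
  @Matroid _ (fun _ => true) isT (@Unn_sub n) (@Unn_aug n).

Definition parallel (T : finType) (M : matroid T) (x y : T) : bool :=
  [&& ~~ loop M x, ~~ loop M y & (x == y) || ~~ indep M [set x; y]].

(* S is the ground set of a simplification of M: one representative from
   each parallel class of non-loops. *)
Definition simplification_set (T : finType) (M : matroid T) (S : {set T}) : Prop :=
  [/\ forall x, x \in S -> ~~ loop M x,
      forall x, ~~ loop M x -> exists2 y, y \in S & parallel M x y &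
      forall x y, x \in S -> y \in S -> parallel M x y -> x = y].

Definition simplification_free (T : finType) (M : matroid T) (n : nat) : Prop :=
  exists S : {set T}, simplification_set M S /\
    exists g : 'I_n -> T, iso_restr (Unn n) M S g.

(* Main.v *)
Require Import Defs.
From mathcomp Require Import all_boot.
Set Implicit Arguments. Unset Strict Implicit. Unset Printing Implicit Defensive.

Section Gen.
Variables (T : finType) (M : matroid T).

Lemma indep_extend (I J : {set T}) : indep M I -> indep M J -> #|I| <= #|J| ->
  exists K : {set T}, [/\ K \subset J, indep M (I :|: K) & #|I :|: K| = #|J|].
Proof.
move=> iI iJ; move: {2}(#|J| - #|I|) (erefl (#|J| - #|I|)) => k.
elim: k I iI => [|k IH] I iI hk le.
  exists set0; rewrite setU0 sub0set iI; split=> //.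
  by apply/eqP; rewrite eqn_leq le /= -subn_eq0 hk.
have lt : #|I| < #|J| by rewrite -subn_gt0 hk.
have [x /setDP [xJ xI] ix] := indep_aug iI iJ lt.
have hk' : #|J| - #|x |: I| = k by rewrite cardsU1 xI add1n subnS hk.
have [K [KJ iK cK]] : exists K : {set T}, [/\ K \subset J, indep M ((x |: I) :|: K) & #|(x |: I) :|: K| = #|J|].
  by apply: IH => //; rewrite cardsU1 xI.
exists (x |: K); split.
- by rewrite subUset sub1set xJ KJ.
- by rewrite setUA (setUC I).
- by rewrite -cK setUA (setUC I) -setUA setUA -setUA.
Qed.

Lemma indep1P x : ~~ loop M x = indep M [set x].
Proof. by rewrite /loop negbK. Qed.

Lemma parallel_sym x y : parallel M x y = parallel M y x.
Proof. by rewrite /parallel andbCA eq_sym setUC. Qed.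

Lemma parallel_dep x y : parallel M x y -> x != y -> ~~ indep M [set x; y].
Proof. by case/and3P=> _ _ /orP [->|]. Qed.

Lemma parallel_trans y x z : parallel M x y -> parallel M y z -> parallel M x z.
Proof.
case/and3P=> nx ny pxy /and3P [_ nz pyz]; rewrite /parallel nx nz /=.
case: (eqVneq x z) => //= xz; apply/negP => ixz.
case: (eqVneq x y) => xy; first by subst y; rewrite ixz (negbTE xz) in pyz.
case: (eqVneq y z) => yz; first by subst z; rewrite ixz (negbTE xy) in pxy.
rewrite (negbTE xy) /= in pxy; rewrite (negbTE yz) /= in pyz.
rewrite indep1P in ny.
have hc : #|[set y]| < #|[set x; z]| by rewrite cards1 cards2 xz.
have [w] := indep_aug ny ixz hc.
rewrite !inE => /andP [_ /orP [] /eqP ->].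
  by rewrite (negbTE pxy).
by rewrite setUC (negbTE pyz).
Qed.

Lemma indep_replace X x y : indep M X -> x \in X -> y \notin X -> parallel M x y ->
  indep M (y |: (X :\ x)).
Proof.
move=> iX xX yX pxy.
have ny : indep M [set y] by case/and3P: pxy => _; rewrite indep1P.
have [|K [KX iK cK]] := indep_extend ny iX.
  rewrite cards1 (cardsD1 x X) xX //.
have yK : y \notin K by apply: contra yX; apply: (subsetP KX).
have xy : x != y by apply: contraNneq yX => <-.
have xK : x \notin K.
  apply/negP => xK; have /negP := parallel_dep pxy xy; apply.
  apply: (indep_sub _ iK); apply/subsetP => z; rewrite !inE => /orP [] /eqP ->.
    by rewrite xK orbT.
  by rewrite eqxx.
suff -> : X :\ x = K by [].
apply/eqP; rewrite eq_sym eqEcard; apply/andP; split.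
  apply/subsetP => z zK; rewrite !inE (subsetP KX) // andbT.
  by apply: contraNneq xK => <-.
move: cK; rewrite cardsU1 yK (cardsD1 x X) xX !add1n => -[->].
by [].
Qed.
Section Rho.
Variables (D : {set T}) (rho : T -> T).
Hypothesis hrD : forall x, x \in D -> rho x \in D.
Hypothesis hrr : forall x, x \in D -> rho (rho x) = rho x.
Hypothesis hpar : forall x, x \in D -> parallel M x (rho x).

Lemma rho_core k : forall A : {set T}, A \subset D -> {in A &, injective rho} ->
  #|[set a in A | rho a != a]| = k -> indep M A = indep M (rho @: A).
Proof.
elim: k => [|k IH] A AD inj.
  move/eqP; rewrite cards_eq0 => /eqP h.
  suff -> : rho @: A = A by [].
  rewrite -{2}(imset_id A); apply: eq_in_imset => a aA; apply/eqP.
  apply: contraT => ha; have : a \in set0 by rewrite -h inE aA.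
  by rewrite inE.
move=> hk; have : 0 < #|[set a in A | rho a != a]| by rewrite hk.
case/card_gt0P => a; rewrite inE => /andP [aA ra].
have aD : a \in D by apply: (subsetP AD).
set b := rho a.
have rb : rho b = rho a by apply: hrr.
have bA : b \notin A.
  apply/negP => bA; move: ra; rewrite -/b; have -> : b = a by apply: inj.
  by rewrite eqxx.
have ba : b != a by [].
set A' := b |: (A :\ a).
have inA' x : x \in A' = (x == b) || (x != a) && (x \in A) by rewrite !inE.
have A'D : A' \subset D.
  apply/subsetP => x; rewrite inA' => /orP [/eqP ->|/andP [_ xA]]; first exact: hrD.
  exact: (subsetP AD).
have other x : x \in A -> x != a -> rho x != rho a.
  by move=> xA xa; apply: contra xa => /eqP h; apply/eqP; apply: inj.
have inj' : {in A' &, injective rho}.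
  move=> x y; rewrite !inA' => /orP [/eqP ->|/andP [xa xA]] /orP [/eqP ->|/andP [ya yA]] //.
  - by rewrite rb => /esym/eqP; rewrite (negbTE (other _ yA ya)).
  - by rewrite rb => /eqP; rewrite (negbTE (other _ xA xa)).
  - exact: inj.
have cnt : #|[set c in A' | rho c != c]| = k.
  suff -> : [set c in A' | rho c != c] = [set c in A | rho c != c] :\ a.
    by move: hk; rewrite (cardsD1 a [set c in A | rho c != c]) inE aA ra add1n => -[].
  apply/setP => x; rewrite !inE; case: (eqVneq x b) => [->|xb] /=.
    by rewrite rb (negbTE bA) /b eqxx andbF.
  by rewrite andbA.
have imE : rho @: A' = rho @: A by rewrite imsetU1 rb -imsetU1 setD1K.
rewrite -imE -(IH A' A'D inj' cnt).
apply/idP/idP => h.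
  by apply: indep_replace => //; apply: hpar.
have -> : A = a |: (A' :\ b) by rewrite setU1K ?setD1K // !inE (negbTE bA) andbF.
apply: indep_replace => //.
- by rewrite !inE eqxx.
- by rewrite inA' eqxx eq_sym (negbTE ba).
- by rewrite parallel_sym; apply: hpar.
Qed.

Lemma rhoP (A : {set T}) : A \subset D ->
  indep M A <-> {in A &, injective rho} /\ indep M (rho @: A).
Proof.
move=> AD; split.
  move=> iA.
  have inj : {in A &, injective rho}.
    move=> x y xA yA rxy; apply/eqP; apply: contraT => xy.
    have pxy : parallel M x y.
      apply: (parallel_trans (y := rho x)); first by apply: hpar; apply: (subsetP AD).
      by rewrite rxy parallel_sym; apply: hpar; apply: (subsetP AD).
    have /negP := parallel_dep pxy xy; case; apply: (indep_sub _ iA).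
    by apply/subsetP => z; rewrite !inE => /orP [] /eqP ->.
  by split => //; rewrite -(rho_core AD inj erefl).
by case=> inj; rewrite -(rho_core AD inj erefl).
Qed.
End Rho.

Lemma mrank_ge (A B : {set T}) : A \subset B -> indep M A -> #|A| <= mrank M B.
Proof. by move=> AB iA; rewrite /mrank; apply: (leq_bigmax_cond (F := fun C : {set T} => #|C|)); rewrite AB iA. Qed.

Lemma mrank_le (B : {set T}) k :
  (forall A : {set T}, A \subset B -> indep M A -> #|A| <= k) -> mrank M B <= k.
Proof. by move=> h; apply/bigmax_leqP => A /andP [AB iA]; apply: h. Qed.

Lemma mrank_wit (B : {set T}) :
  exists2 A : {set T}, A \subset B /\ indep M A & #|A| = mrank M B.
Proof.
have : 0 < #|[pred A : {set T} | (A \subset B) && indep M A]|.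
  by apply/card_gt0P; exists set0; rewrite inE sub0set indep0.
case/(eq_bigmax_cond (fun A : {set T} => #|A|)) => A; rewrite inE => /andP [AB iA] h.
by exists A => //; rewrite /mrank -h.
Qed.

Lemma indep_nl (A : {set T}) x : indep M A -> x \in A -> ~~ loop M x.
Proof. by move=> iA xA; rewrite indep1P; apply: (indep_sub _ iA); rewrite sub1set. Qed.

End Gen.

Section NN.
Variables (T2 : finType) (N : matroid T2) (n : nat) (S : {set T2}) (g : 'I_n -> T2).
Hypotheses (hS : simplification_set N S) (hg : iso_restr (Unn n) N S g).

Lemma g_indep (B : {set 'I_n}) : indep N (g @: B).
Proof. by case: hg => _ _ <-. Qed.

Lemma g_inj : injective g. Proof. by case: hg. Qed.

Lemma gS i : g i \in S.
Proof. by case: hg => _ <- _; apply: imset_f. Qed.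

Lemma g_nl i : ~~ loop N (g i).
Proof. by rewrite indep1P -imset_set1 g_indep. Qed.

Definition cls f := [pick i | parallel N f (g i)].

Lemma cls_par f i : cls f = Some i -> parallel N f (g i).
Proof. by rewrite /cls; case: pickP => // j pj [<-]. Qed.

Lemma cls_spec f i : parallel N f (g i) -> cls f = Some i.
Proof.
move=> pi; rewrite /cls; case: pickP => [j pj|none]; last by rewrite none in pi.
case: hS => _ _ h3; congr Some; apply: g_inj; apply: h3; rewrite ?gS //.
by apply: (parallel_trans (y := f)); rewrite // parallel_sym.
Qed.

Lemma cls_loop f : loop N f -> cls f = None.
Proof. by move=> lf; rewrite /cls; case: pickP => // j /and3P [/negP]. Qed.

Lemma cls_nl f : ~~ loop N f -> exists i, cls f = Some i.
Proof.
case: hS => _ h2 _ nf; have [y yS pfy] := h2 f nf.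
case: hg => _ gim _; move: yS; rewrite -gim => /imsetP [i _ yi]; subst y.
by exists i; apply: cls_spec.
Qed.

Lemma cls_g i : cls (g i) = Some i.
Proof. by apply: cls_spec; rewrite /parallel g_nl eqxx. Qed.

Definition rhoN f := if cls f is Some i then g i else f.
Definition DN := [set f | ~~ loop N f].

Lemma rhoN_hyps :
  [/\ forall f, f \in DN -> rhoN f \in DN,
      forall f, f \in DN -> rhoN (rhoN f) = rhoN f &
      forall f, f \in DN -> parallel N f (rhoN f)].
Proof.
split=> f; rewrite inE => /cls_nl [i ci]; rewrite /rhoN ci.
- by rewrite inE g_nl.
- by rewrite cls_g.
- exact: cls_par ci.
Qed.

Lemma indepN (A : {set T2}) : indep N A <-> A \subset DN /\ {in A &, injective rhoN}.
Proof.
case: rhoN_hyps => h1 h2 h3; split.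
  move=> iA; have AD : A \subset DN.
    by apply/subsetP => f fA; rewrite inE (indep_nl iA fA).
  by split => //; case/(rhoP h1 h2 h3 AD): iA.
case=> AD inj; apply/(rhoP h1 h2 h3 AD); split => //.
apply: (indep_sub _ (g_indep setT)); apply/subsetP => _ /imsetP [f fA ->].
have /cls_nl [i ci] : ~~ loop N f by move: (subsetP AD f fA); rewrite inE.
by rewrite /rhoN ci imset_f.
Qed.

Lemma mrankN : mrank N setT = n.
Proof.
apply/eqP; rewrite eqn_leq; apply/andP; split.
  apply: mrank_le => A _ /indepN [AD inj].
  rewrite -(card_in_imset inj) -(card_ord n) -(card_imset _ g_inj).
  apply: subset_leq_card; apply/subsetP => _ /imsetP [f fA ->].
  have /cls_nl [i ci] : ~~ loop N f by move: (subsetP AD f fA); rewrite inE.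
  by rewrite /rhoN ci imset_f.
rewrite -{1}(card_ord n) -cardsT -(card_imset _ g_inj).
by apply: mrank_ge => //; apply: g_indep.
Qed.
End NN.

Section Main.
Variables (T1 T2 : finType) (M : matroid T1) (N : matroid T2) (n : nat)
  (S : {set T2}) (g : 'I_n -> T2).
Hypotheses (hS : simplification_set N S) (hg : iso_restr (Unn n) N S g).

Definition DD := [set p : T1 * T2 | ~~ loop M p.1 & ~~ loop N p.2].
Definition blk (i : 'I_n) := [set p : T1 * T2 | ~~ loop M p.1 & cls N g p.2 == Some i].
Definition r := mrank M setT.
Definition Pind (A : {set T1 * T2}) :=
  (A \subset DD) && [forall i, (#|fst @: (A :&: blk i)| == #|A :&: blk i|)
                              && indep M (fst @: (A :&: blk i))].

Lemma blk_DD i : blk i \subset DD.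
Proof.
apply/subsetP => p; rewrite !inE => /andP [-> /eqP c] /=.
by apply/negP => /(cls_loop g); rewrite c.
Qed.

Lemma DD_ex p : p \in DD -> exists i, p \in blk i.
Proof.
rewrite !inE => /andP [nM /(cls_nl hS hg) [i ci]].
by exists i; rewrite !inE nM ci eqxx.
Qed.

Lemma blk_uniq p i j : p \in blk i -> p \in blk j -> i = j.
Proof. by rewrite !inE => /andP [_ /eqP ->] /andP [_ /eqP [->]]. Qed.

Lemma card_sum (A : {set T1 * T2}) : A \subset DD -> #|A| = \sum_(i < n) #|A :&: blk i|.
Proof.
move=> AD.
have h i : #|A :&: blk i| = \sum_(x in A) (x \in blk i : nat).
  rewrite -sum1_card (eq_bigl (fun x => (x \in A) && (x \in blk i))); last first.
    by move=> x; rewrite inE.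
  rewrite big_mkcondr /=; apply: eq_bigr => x _; by case: (x \in blk i).
rewrite (eq_bigr _ (fun i _ => h i)) exchange_big /= -sum1_card.
apply: eq_bigr => x xA.
have [i xi] := DD_ex (subsetP AD x xA).
rewrite (bigD1 i) //= xi big1 // => j ji.
by apply/eqP; rewrite eqb0; apply: contra ji => xj; rewrite (blk_uniq xj xi).
Qed.
Lemma Pind0 : Pind set0.
Proof.
rewrite /Pind sub0set /=; apply/forallP => i.
by rewrite set0I imset0 !cards0 eqxx indep0.
Qed.

Lemma Pind_sub (A B : {set T1 * T2}) : A \subset B -> Pind B -> Pind A.
Proof.
move=> AB /andP [BD /forallP h]; rewrite /Pind (subset_trans AB BD) /=.
apply/forallP => i; move/(_ i): h => /andP [/imset_injP inj iM].
have sub : A :&: blk i \subset B :&: blk i by apply: setSI.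
apply/andP; split.
  by apply/imset_injP => x y xa ya; apply: inj; apply: (subsetP sub).
exact: (indep_sub (imsetS _ sub) iM).
Qed.

Lemma setU1I (T : finType) (b : T) (A X : {set T}) :
  (b |: A) :&: X = if b \in X then b |: (A :&: X) else A :&: X.
Proof.
apply/setP => x; case: ifP => bX; rewrite !inE; case: (eqVneq x b) => [->|] //=.
by rewrite bX andbF.
Qed.

Lemma Pind_aug (A B : {set T1 * T2}) : Pind A -> Pind B -> #|A| < #|B| ->
  exists2 x, x \in B :\: A & Pind (x |: A).
Proof.
move=> /andP [AD /forallP hA] /andP [BD /forallP hB] lt.
have [i lti] : exists i, #|A :&: blk i| < #|B :&: blk i|.
  apply/existsP; move: lt; apply: contraTT => /existsPn h.
  rewrite -leqNgt (card_sum AD) (card_sum BD); apply: leq_sum => i _.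
  by rewrite leqNgt; apply: h.
move/(_ i): (hA) => /andP [/eqP cA iA]; move/(_ i): (hB) => /andP [/eqP cB iB].
have [x /setDP [xB xA] ix] : exists2 x, x \in fst @: (B :&: blk i) :\: fst @: (A :&: blk i)
    & indep M (x |: fst @: (A :&: blk i)).
  by apply: indep_aug => //; rewrite cA cB.
case/imsetP: xB => b bBi xb; subst x.
have bi : b \in blk i by move: bBi; rewrite inE => /andP [].
have bA : b \notin A.
  by apply: contra xA => bA; apply: imset_f; rewrite inE bA bi.
exists b; first by rewrite inE bA; move: bBi; rewrite inE => /andP [].
rewrite /Pind subUset sub1set (subsetP BD) //; last by move: bBi; rewrite inE => /andP [].
rewrite AD /=; apply/forallP => j; rewrite setU1I.
case: ifP => bj; last exact: hA.
have ji := blk_uniq bj bi; subst j.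
rewrite imsetU1 ix andbT cardsU1 xA cardsU1 cA.
by rewrite inE (negbTE bA).
Qed.

Definition Pmat : matroid (T1 * T2)%type := @Matroid _ Pind Pind0 Pind_sub Pind_aug.

Lemma row_im (e : T1) : [set (e, x) | x : T2] = (fun x => (e, x)) @: [set: T2].
Proof. by apply/setP => p; apply/imsetP/imsetP => -[x _ ->]; exists x. Qed.

Lemma col_im (f : T2) : [set (x, f) | x : T1] = (fun x => (x, f)) @: [set: T1].
Proof. by apply/setP => p; apply/imsetP/imsetP => -[x _ ->]; exists x. Qed.

Lemma nl_cls f : ~~ loop N f -> exists i, cls N g f = Some i.
Proof. exact: (cls_nl hS hg). Qed.

Lemma P_row e : ~~ loop M e -> iso_restr N Pmat [set (e, x) | x : T2] (fun x => (e, x)).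
Proof.
move=> ne; split; first by move=> x y [].
  by rewrite row_im.
move=> A; rewrite /= /Pind; apply/idP/idP.
  case/(indepN hS hg) => AD inj; apply/andP; split.
    apply/subsetP => _ /imsetP [f fA ->]; rewrite !inE ne /=.
    by move: (subsetP AD f fA); rewrite inE.
  apply/forallP => i; apply/andP; split.
    apply/imset_injP => _ _ /setIP [/imsetP [f fA ->] fi] /setIP [/imsetP [f' fA' ->] fi'] /= _.
    move: fi fi'; rewrite !inE /= => /andP [_ /eqP ci] /andP [_ /eqP ci'].
    by congr pair; apply: inj => //; rewrite /rhoN ci ci'.
  have ie : indep M [set e] by rewrite -indep1P.
  apply: (indep_sub _ ie).
  by apply/subsetP => _ /imsetP [_ /setIP [/imsetP [f _ ->] _] ->]; rewrite inE.
case/andP => RD /forallP h; apply/(indepN hS hg); split.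
  apply/subsetP => f fA; have := subsetP RD (e, f) (imset_f _ fA).
  by rewrite !inE => /andP [].
move=> f f' fA fA'.
have nf : ~~ loop N f by have := subsetP RD (e, f) (imset_f _ fA); rewrite inE => /andP [].
have nf' : ~~ loop N f' by have := subsetP RD (e, f') (imset_f _ fA'); rewrite inE => /andP [].
have [i ci] := nl_cls nf; have [j cj] := nl_cls nf'.
rewrite /rhoN ci cj => /(g_inj hg) ij; subst j.
move/(_ i): h => /andP [/imset_injP inj _].
have := inj (e, f) (e, f'); rewrite !inE !imset_f //= ne ci cj eqxx => /(_ isT isT erefl).
by case.
Qed.

Lemma P_col f : ~~ loop N f -> iso_restr M Pmat [set (x, f) | x : T1] (fun x => (x, f)).
Proof.
move=> nf; split; first by move=> x y [].
  by rewrite col_im.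
have [i0 ci0] := nl_cls nf.
have fstE (A : {set T1}) : fst @: ((fun x => (x, f)) @: A) = A.
  by rewrite -imset_comp imset_id.
move=> A; rewrite /= /Pind; apply/idP/idP.
  move=> iA; apply/andP; split.
    by apply/subsetP => _ /imsetP [e eA ->]; rewrite !inE nf (indep_nl iA eA).
  apply/forallP => i; apply/andP; split.
    by apply/imset_injP => _ _ /setIP [/imsetP [x _ ->] _] /setIP [/imsetP [y _ ->] _] /= ->.
  apply: (indep_sub _ iA); rewrite -{2}(fstE A); apply: imsetS; exact: subsetIl.
case/andP => CD /forallP /(_ i0) /andP [_].
suff -> : (fun x => (x, f)) @: A :&: blk i0 = (fun x => (x, f)) @: A by rewrite fstE.
apply/setIidPl; apply/subsetP => _ /imsetP [e eA ->].
have := subsetP CD (e, f) (imset_f _ eA); rewrite !inE ci0 => /andP [-> _].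
by rewrite eqxx.
Qed.

Lemma P_rowloop e : loop M e -> mrank Pmat [set (e, x) | x : T2] = 0.
Proof.
move=> le; apply/eqP; rewrite -leqn0; apply: mrank_le => B BR /andP [BD _].
rewrite leqn0 cards_eq0; apply/eqP/setP => p; rewrite inE; apply/negP => pB.
have := subsetP BD p pB; have := subsetP BR p pB.
by case/imsetP => x _ -> ; rewrite inE le.
Qed.

Lemma P_colloop f : loop N f -> mrank Pmat [set (x, f) | x : T1] = 0.
Proof.
move=> lf; apply/eqP; rewrite -leqn0; apply: mrank_le => B BR /andP [BD _].
rewrite leqn0 cards_eq0; apply/eqP/setP => p; rewrite inE; apply/negP => pB.
have := subsetP BD p pB; have := subsetP BR p pB.
by case/imsetP => x _ -> ; rewrite inE lf andbF.
Qed.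

Lemma P_rank : mrank Pmat setT = r * n.
Proof.
apply/eqP; rewrite eqn_leq; apply/andP; split.
  apply: mrank_le => A _ /andP [AD /forallP h].
  rewrite (card_sum AD) mulnC.
  apply: (@leq_trans (\sum_(i < n) r)); last by rewrite sum_nat_const card_ord.
  apply: leq_sum => i _; move/(_ i): h => /andP [/eqP <- iA].
  exact: mrank_ge.
have [Bm [_ iBm] cBm] := mrank_wit M setT.
set Z0 := setX Bm (g @: [set: 'I_n]).
have -> : r * n = #|Z0| by rewrite cardsX (card_imset _ (g_inj hg)) cardsT card_ord cBm.
apply: mrank_ge; first exact: subsetT.
rewrite /= /Pind; apply/andP; split.
  apply/subsetP => -[e f]; rewrite !inE /= => /andP [eB /imsetP [k _ ->]].
  by rewrite (indep_nl iBm eB) (g_nl hg).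
apply/forallP => i; apply/andP; split.
  apply/imset_injP => -[e f] [e' f']; rewrite !inE /=.
  move=> /andP [/andP [_ /imsetP [k _ fk]] /andP [_ /eqP ck]].
  move=> /andP [/andP [_ /imsetP [k' _ fk']] /andP [_ /eqP ck']] ee.
  subst f f' e'; move: ck ck'; rewrite !(cls_g hS hg) => -[->] [->] //.
apply: (indep_sub _ iBm); apply/subsetP => y /imsetP [[e f] ein ye]; subst y.
by move: ein; rewrite !inE /= => /andP [/andP [eB _] _].
Qed.

Section Q.
Variable Q : matroid (T1 * T2)%type.
Hypothesis hQ : quasi_product M N Q.

Lemma Q_nd p : p \notin DD -> ~~ indep Q [set p].
Proof.
case: p => e f; case: hQ => _ hcol hrl hcl.
rewrite !inE /= negb_and !negbK => /orP [le|lf]; apply/negP => ip.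
  have sub : [set (e, f)] \subset [set (e, x) | x : T2].
    by rewrite sub1set; apply/imsetP; exists f.
  by have := mrank_ge sub ip; rewrite hrl // cards1.
have sub : [set (e, f)] \subset [set (x, f) | x : T1].
  by rewrite sub1set; apply/imsetP; exists e.
by have := mrank_ge sub ip; rewrite hcl // cards1.
Qed.

Lemma Q_ind p : p \in DD -> indep Q [set p].
Proof.
case: p => e f; rewrite inE /= => /andP [ne nf].
case: hQ => _ /(_ f nf) [_ _ h] _ _.
by have := h [set e]; rewrite imset_set1 => <-; rewrite -indep1P.
Qed.

Lemma Q_DD (A : {set T1 * T2}) : indep Q A -> A \subset DD.
Proof.
move=> iA; apply/subsetP => p pA; apply: contraT => /Q_nd /negP; case.
by apply: (indep_sub _ iA); rewrite sub1set.
Qed.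

Definition rhoQ (p : T1 * T2) := (p.1, rhoN N g p.2).

Lemma rhoQ_hyps :
  [/\ forall p, p \in DD -> rhoQ p \in DD,
      forall p, p \in DD -> rhoQ (rhoQ p) = rhoQ p &
      forall p, p \in DD -> parallel Q p (rhoQ p)].
Proof.
case: (rhoN_hyps hS hg) => h1 h2 h3.
have hD p : p \in DD -> p.2 \in DN N by rewrite !inE => /andP [].
split; move=> [e f] pD.
- have := h1 _ (hD _ pD); move: pD; rewrite !inE /= => /andP [-> _] -> //.
- by rewrite /rhoQ /= h2 //; exact: (hD _ pD).
have rD : rhoQ (e, f) \in DD.
  have := h1 _ (hD _ pD); move: (pD); rewrite !inE /= => /andP [-> _] -> //.
rewrite /parallel !indep1P !Q_ind //=.
case: (eqVneq f (rhoN N g f)) => [ef|nef].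
  by rewrite /rhoQ /= -ef eqxx.
have pf := h3 _ (hD _ pD).
apply/orP; right; case: hQ => /(_ e) + _ _ _.
have ne : ~~ loop M e by move: pD; rewrite inE => /andP [].
move=> /(_ ne) [_ _ h].
move: (parallel_dep pf nef); rewrite h imsetU1 imset_set1.
by [].
Qed.

Lemma Q_block i (A : {set T1 * T2}) : A \subset blk i ->
  indep Q A = (#|fst @: A| == #|A|) && indep M (fst @: A).
Proof.
move=> Ai.
have AD : A \subset DD := subset_trans Ai (blk_DD i).
case: rhoQ_hyps => h1 h2 h3.
have rE p : p \in A -> rhoQ p = (p.1, g i).
  move=> pA; move: (subsetP Ai p pA); rewrite inE => /andP [_ /eqP c].
  by rewrite /rhoQ /rhoN c.
have imE : rhoQ @: A = (fun x => (x, g i)) @: (fst @: A).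
  by rewrite -imset_comp; apply: eq_in_imset => p pA; rewrite rE.
have injE : {in A &, injective rhoQ} <-> {in A &, injective fst}.
  split=> inj p q pA qA.
    by move=> e; apply: inj => //; rewrite !rE // e.
  by rewrite !rE // => -[]; apply: inj.
have colE : indep Q (rhoQ @: A) = indep M (fst @: A).
  case: hQ => _ /(_ (g i) (g_nl hg i)) [_ _ h] _ _.
  by rewrite imE h.
apply/idP/idP.
  case/(rhoP h1 h2 h3 AD) => /injE inj iA.
  by rewrite -colE iA andbT; apply/imset_injP.
case/andP => /imset_injP inj iM; apply/(rhoP h1 h2 h3 AD); split.
  exact/injE.
by rewrite colE.
Qed.

Lemma Q_blk_le i (A : {set T1 * T2}) : A \subset blk i -> indep Q A -> #|A| <= r.
Proof.
move=> Ai; rewrite (Q_block Ai) => /andP [/eqP <- iM].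
exact: mrank_ge (subsetT _) iM.
Qed.

Lemma Q_blk_sizes (X : {set T1 * T2}) : indep Q X -> #|X| = r * n ->
  forall i, #|X :&: blk i| = r.
Proof.
move=> iX cX i; apply/eqP; rewrite eqn_leq.
rewrite (Q_blk_le (subsetIr _ _) (indep_sub (subsetIl _ _) iX)) /=.
have en : r * n = \sum_(j < n) r by rewrite sum_nat_const card_ord mulnC.
move: cX; rewrite (card_sum (Q_DD iX)) en.
rewrite (bigD1 i) //= [in X in _ = X -> _](bigD1 i) //= => e.
rewrite -(leq_add2r (\sum_(j < n | j != i) #|X :&: blk j|)) e leq_add2l.
apply: leq_sum => j _.
exact: (Q_blk_le (subsetIr _ _) (indep_sub (subsetIl _ _) iX)).
Qed.

Lemma Q_swap (X B : {set T1 * T2}) i : indep Q X -> #|X| = r * n ->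
  B \subset blk i -> indep Q B -> #|B| = r ->
  indep Q ((X :\: blk i) :|: B) /\ #|(X :\: blk i) :|: B| = r * n.
Proof.
move=> iX cX Bi iB cB.
have le : #|B| <= #|X| by rewrite cX cB leq_pmulr // (leq_ltn_trans _ (ltn_ord i)).
have [K [KX iK cK]] := indep_extend iB iX le.
have KB : K :&: blk i \subset B.
  have sub : B \subset B :|: (K :&: blk i) by apply: subsetUl.
  have h1 : B :|: (K :&: blk i) \subset blk i by rewrite subUset Bi subsetIr.
  have h2 : indep Q (B :|: (K :&: blk i)).
    by apply: (indep_sub _ iK); apply: setUS; apply: subsetIl.
  have := Q_blk_le h1 h2; rewrite -cB => c.
  have /eqP e : B == B :|: (K :&: blk i) by rewrite eqEcard sub c.
  by rewrite e subsetUr.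
have BKE : B :|: K = B :|: (K :\: blk i).
  apply/setP => x; rewrite !in_setU in_setD; case: (boolP (x \in B)) => //= xB.
  case: (boolP (x \in blk i)) => //= xi; apply/negP => xK.
  by move: xB; rewrite (subsetP KB) // in_setI xK xi.
have KXi : K :\: blk i \subset X :\: blk i by apply: setSD.
have cXi : #|X| = r + #|X :\: blk i|.
  by rewrite -(cardsID (blk i) X) (Q_blk_sizes iX cX).
have e : K :\: blk i = X :\: blk i.
  apply/eqP; rewrite eqEcard KXi /=.
  rewrite -(leq_add2l r) -cXi -cK BKE cardsU -cB.
  exact: leq_subr.
rewrite setUC -e -BKE; split=> //; by rewrite cK.
Qed.

Lemma Q_union (B : {set T1 * T2}) : B \subset DD ->
  (forall i, indep Q (B :&: blk i) /\ #|B :&: blk i| = r) -> mrank Q setT = r * n ->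
  indep Q B.
Proof.
move=> BD hB hrk.
have [Z [_ iZ] cZ] := mrank_wit Q setT; rewrite hrk in cZ.
suff : forall k (X : {set T1 * T2}), indep Q X -> #|X| = r * n ->
   #|[set i | X :&: blk i != B :&: blk i]| = k -> indep Q B by move/(_ _ Z iZ cZ erefl).
elim=> [|k IH] X iX cX.
  move/eqP; rewrite cards_eq0 => /eqP h.
  have hi i : X :&: blk i = B :&: blk i.
    apply/eqP; apply: contraT => ne.
    have : i \in set0 by rewrite -h inE.
    by rewrite inE.
  suff -> : B = X by [].
  apply/setP => x; apply/idP/idP => xin.
    have [j xj] := DD_ex (subsetP BD x xin).
    have : x \in B :&: blk j by rewrite in_setI xin xj.
    by rewrite -hi in_setI => /andP [].
  have [j xj] := DD_ex (subsetP (Q_DD iX) x xin).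
  have : x \in X :&: blk j by rewrite in_setI xin xj.
  by rewrite hi in_setI => /andP [].
move=> hk; have : 0 < #|[set i | X :&: blk i != B :&: blk i]| by rewrite hk.
case/card_gt0P => i; rewrite inE => ni.
have [hBi cBi] := hB i.
have [iX' cX'] := Q_swap iX cX (subsetIr _ _) hBi cBi.
apply: (IH _ iX' cX').
have bE j : ((X :\: blk i) :|: (B :&: blk i)) :&: blk j =
            if j == i then B :&: blk j else X :&: blk j.
  apply/setP => x; case: (eqVneq j i) => [->|ji]; rewrite !(in_setI, in_setU, in_setD).
    by case: (x \in blk i); rewrite /= ?andbF ?andbT ?orbF.
  case: (boolP (x \in blk j)) => xj; rewrite ?andbF ?andbT //.
  have xi : x \notin blk i by apply: contra ji => xi; rewrite (blk_uniq xj xi).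
  by rewrite (negbTE xi) /= andbF orbF.
suff -> : [set j | ((X :\: blk i) :|: (B :&: blk i)) :&: blk j != B :&: blk j] =
          [set j | X :&: blk j != B :&: blk j] :\ i.
  by move: hk; rewrite (cardsD1 i) inE ni add1n => -[].
apply/setP => j; rewrite !inE bE; case: (eqVneq j i) => //= ->.
by rewrite eqxx.
Qed.

Lemma Q_char (hrk : mrank Q setT = r * n) (A : {set T1 * T2}) : indep Q A = Pind A.
Proof.
apply/idP/idP.
  move=> iA; rewrite /Pind (Q_DD iA); apply/forallP => i.
  by rewrite -(Q_block (subsetIr A (blk i))); apply: (indep_sub (subsetIl _ _) iA).
case/andP => AD /forallP hA.
have iAi i : indep Q (A :&: blk i) by rewrite (Q_block (subsetIr _ _)); apply: hA.
have ex i : exists B : {set T1 * T2}, [&& A :&: blk i \subset B, B \subset blk i,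
    indep Q B & #|B| == r].
  have [Bm [_ iBm] cBm] := mrank_wit M setT.
  set B0 := (fun x => (x, g i)) @: Bm.
  have B0i : B0 \subset blk i.
    apply/subsetP => _ /imsetP [e eB ->].
    by rewrite inE /= (indep_nl iBm eB) (cls_g hS hg) eqxx.
  have iB0 : indep Q B0.
    by case: hQ => _ /(_ (g i) (g_nl hg i)) [_ _ h] _ _; rewrite -h.
  have cB0 : #|B0| = r by rewrite card_imset // => x y [].
  have le : #|A :&: blk i| <= #|B0| by rewrite cB0; exact: Q_blk_le (subsetIr _ _) (iAi i).
  have [K [KB iK cK]] := indep_extend (iAi i) iB0 le.
  exists ((A :&: blk i) :|: K); rewrite subsetUl iK cK cB0 eqxx andbT /=.
  by rewrite subUset subsetIr (subset_trans KB B0i).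
pose Bs i := odflt set0 [pick B : {set T1 * T2} | [&& A :&: blk i \subset B,
    B \subset blk i, indep Q B & #|B| == r]].
have BsP i : [&& A :&: blk i \subset Bs i, Bs i \subset blk i, indep Q (Bs i) & #|Bs i| == r].
  rewrite /Bs; case: pickP => [B hB|none] //=.
  by have [B hB] := ex i; rewrite none in hB.
set Bb := \bigcup_(i < n) Bs i.
have BbI j : Bb :&: blk j = Bs j.
  apply/setP => x; rewrite in_setI; apply/idP/idP.
    case/andP => /bigcupP [i _ xi] xj.
    have /and4P [_ Bsi _ _] := BsP i.
    by rewrite -(blk_uniq (subsetP Bsi x xi) xj).
  move=> xj; have /and4P [_ Bsj _ _] := BsP j.
  by rewrite (subsetP Bsj) // andbT; apply/bigcupP; exists j.
have BbD : Bb \subset DD.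
  apply/bigcupsP => i _; have /and4P [_ Bsi _ _] := BsP i.
  exact: subset_trans Bsi (blk_DD i).
have iBb : indep Q Bb.
  apply: Q_union => // i; rewrite BbI.
  by have /and4P [_ _ -> /eqP ->] := BsP i.
apply: (indep_sub _ iBb); apply/subsetP => x xA.
have [j xj] := DD_ex (subsetP AD x xA).
have /and4P [ABs _ _ _] := BsP j.
by apply/bigcupP; exists j => //; apply: (subsetP ABs); rewrite in_setI xA xj.
Qed.

End Q.
End Main.

Theorem corollary2p5 (T1 T2 : finType) (M : matroid T1) (N : matroid T2) (n : nat) :
  simplification_free N n ->
  exists P : matroid (T1 * T2)%type, tensor_product M N P /\
    (forall Q : matroid (T1 * T2)%type, tensor_product M N Q -> indep Q =1 indep P).
Proof.
move=> [S [hS [g hg]]].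
exists (Pmat M hS hg); split.
  split; last by rewrite P_rank (mrankN hS hg).
  split.
  - exact: P_row.
  - exact: P_col.
  - exact: P_rowloop.
  - exact: P_colloop.
move=> Q [hQ hrk] A /=.
have hr : mrank Q setT = r M * n by rewrite hrk (mrankN hS hg).
exact: (Q_char hS hg hQ hr).
Qed.
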